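(* For every $n \geq 2$, the set $\{d_{n1}\}$ is equidistributed.
   Context: A linear arrangement of $\{1,\ldots,n\}$ is a sequence $a_1\cdots a_n$ in which each of $1,\ldots,n$ appears exactly once. It contains the pattern $ij$ if $a_t=i$ and $a_{t+1}=j$ for some $t$; otherwise it avoids it. $\{d_{n1}\}$ is the set of linear arrangements of $\{1,\ldots,n\}$ that avoid all of the patterns $12, 23, \ldots, (n-1)n$ and contain the pattern $n1$. For a set $X$ of linear arrangements of $\{1,\ldots,n\}$ and $i\in\{1,\ldots,n\}$, the class $X^{(i)}$ is the set of arrangements in $X$ whose first entry is $i$. $X$ is called equidistributed if it is partitioned into its nonempty classes and all nonempty classes $X^{(i)}$ have the same cardinality. *)

(* Defs.v *)
From mathcomp Require Import all_boot.
Set Implicit Arguments. Unset Strict Implicit. Unset Printing Implicit Defensive.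

Definition arrangement (n : nat) (s : seq nat) : bool := perm_eq s (iota 1 n).

Definition contains_pat (s : seq nat) (i j : nat) : bool :=
  has (fun t => (nth 0 s t == i) && (nth 0 s t.+1 == j)) (iota 0 (size s).-1).

(* The set {d_{n1}} of arrangements of {1..n} avoiding 12, 23, ..., (n-1)n and
   containing n1, as a duplicate-free list (permutations enumerates every
   arrangement exactly once). *)
Definition d_n1 (n : nat) : seq (seq nat) :=
  [seq s <- permutations (iota 1 n) |
     all (fun k => ~~ contains_pat s k k.+1) (iota 1 n.-1) && contains_pat s n 1].

Definition arr_class (X : seq (seq nat)) (i : nat) : seq (seq nat) :=
  [seq s <- X | head 0 s == i].

Definition equidistributed (n : nat) (X : seq (seq nat)) : Prop :=
  forall i j, 1 <= i <= n -> 1 <= j <= n ->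
    size (arr_class X i) != 0 -> size (arr_class X j) != 0 ->
    size (arr_class X i) = size (arr_class X j).

(* Main.v *)
Require Import Defs.
From mathcomp Require Import all_boot zify.
Set Implicit Arguments. Unset Strict Implicit. Unset Printing Implicit Defensive.

Fixpoint pairs (s : seq nat) : seq (nat * nat) :=
  match s with
  | x :: ((y :: _) as t) => (x, y) :: pairs t
  | _ => [::]
  end.

Lemma contains_pairs s i j : contains_pat s i j = ((i, j) \in pairs s).
Proof.
elim: s => [|x s IH] //.
case: s IH => [|y s] IH //.
rewrite /contains_pat /= -/(pairs (y :: s)) in_cons -IH /contains_pat /=.
rewrite -[1]/(1+0) iotaDl has_map /=.
congr orb; first by rewrite xpair_eqE [x == i]eq_sym [y == j]eq_sym.
Qed.

Lemma pairs_mem s a b : (a, b) \in pairs s -> (a \in s) && (b \in s).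
Proof.
elim: s => [|x s IH] //.
case: s IH => [|y s] IH //.
rewrite /= -/(pairs (y :: s)) in_cons => /orP [/eqP [-> ->]|/IH].
  by rewrite !in_cons !eqxx orbT.
by rewrite !in_cons => /andP [-> ->]; rewrite !orbT.
Qed.

Lemma pairs_split s a b : (a, b) \in pairs s ->
  exists s1 s2, s = s1 ++ a :: b :: s2.
Proof.
elim: s => [|x s IH] //.
case: s IH => [|y s] IH //.
rewrite /= -/(pairs (y :: s)) in_cons => /orP [/eqP [-> ->]|/IH [s1 [s2 ->]]].
  by exists [::], s.
by exists (x :: s1), s2.
Qed.

Lemma pairs_map f s : pairs (map f s) = map (fun p => (f p.1, f p.2)) (pairs s).
Proof.
elim: s => [|x s IH] //.
by case: s IH => [|y s] IH //= ; rewrite -IH.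
Qed.

Lemma pairs_cons2 x y s : pairs (x :: y :: s) = (x, y) :: pairs (y :: s).
Proof. by []. Qed.

Lemma pairs_catr s1 s2 p : p \in pairs s2 -> p \in pairs (s1 ++ s2).
Proof.
elim: s1 => [|x s1 IH] // H.
move: (IH H); rewrite cat_cons; case: (s1 ++ s2) => [|y w] //.
by rewrite pairs_cons2 inE => ->; rewrite orbT.
Qed.

Section M.
Variable m : nat.

Definition cyc (v : nat) := if v == m then 1 else if v == 0 then 0 else v.+1.

Lemma cyc_inj : injective cyc.
Proof.
move=> x y; rewrite /cyc.
case: (x =P m); case: (y =P m); case: (x =P 0); case: (y =P 0); lia.
Qed.

Fixpoint expand (t : seq nat) : seq nat :=
  match t with
  | [::] => [::]
  | a :: t' => if a == m then m.+1 :: 1 :: expand t' else a.+1 :: expand t'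
  end.

Definition cc (v : nat) := if v == m.+1 then m else v.-1.
Definition contract (s : seq nat) := map cc [seq v <- s | v != 1].

Lemma cc_succ v : cc v.+1 = v.
Proof. rewrite /cc; case: eqP => //; lia. Qed.

Definition L a := if a == m then 1 else a.+1.

Lemma expand_cons b t : exists r, expand (b :: t) = b.+1 :: r.
Proof. rewrite /=; case: eqP => [->|]; eexists; reflexivity. Qed.


Lemma has_cons (T : Type) (p : pred T) x s : has p (x :: s) = p x || has p s.
Proof. by []. Qed.

Definition blk a := if a == m then [:: m.+1; 1] else [:: a.+1].

Lemma expand_cons1 a t : expand (a :: t) = blk a ++ expand t.
Proof. by rewrite /= /blk; case: eqP. Qed.

Lemma expand_cat t1 t2 : expand (t1 ++ t2) = expand t1 ++ expand t2.
Proof. by elim: t1 => [|a t IH] //; rewrite cat_cons !expand_cons1 IH catA. Qed.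

Lemma pairs_expand1 t x y : (x, y) \in pairs (expand t) ->
  ((x == m.+1) && (y == 1)) ||
  has (fun p => (x == L p.1) && (y == p.2.+1)) (pairs t).
Proof.
elim: t => [|a t IH] //.
case: t IH => [|b t] IH.
  rewrite expand_cons1 cats0 /blk; case: eqP => // _; rewrite inE => /eqP [-> ->]; by rewrite !eqxx.
have [r er] := expand_cons b t.
rewrite expand_cons1 er pairs_cons2 has_cons /blk /L; case: (a == m).
  rewrite !cat_cons cat0s !pairs_cons2 -er !inE => /orP [/eqP [-> ->]|/orP [/eqP [-> ->]|/IH]].
  - by rewrite !eqxx.
  - by rewrite !eqxx orbT.
  by case/orP => [->|->]; rewrite ?orbT.
rewrite cat_cons cat0s pairs_cons2 -er !inE => /orP [/eqP [-> ->]|/IH].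
  by rewrite !eqxx orbT.
by case/orP => [->|->]; rewrite ?orbT.
Qed.

Lemma pairs_expand2 t a b : (a, b) \in pairs t -> (L a, b.+1) \in pairs (expand t).
Proof.
elim: t => [|c t IH] //.
case: t IH => [|d t] IH //.
have [r er] := expand_cons d t.
rewrite pairs_cons2 inE expand_cons1 er /blk => /orP [/eqP [-> ->]|/IH].
  rewrite /L; case: (c == m); by rewrite !cat_cons cat0s !pairs_cons2 !inE eqxx ?orbT.
rewrite er => H; case: (c == m); by rewrite !cat_cons cat0s !pairs_cons2 !inE H ?orbT.
Qed.

Lemma pairs_expand3 t : m \in t -> (m.+1, 1) \in pairs (expand t).
Proof.
elim: t => [|c t IH] //.
rewrite inE expand_cons1 => /orP [/eqP <-|/IH H].
  by rewrite /blk eqxx /= inE eqxx.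
exact: pairs_catr.
Qed.


Definition Rcond t := all (fun p => p.2 != cyc p.1) (pairs t).
Definition dcond n s :=
  all (fun k => ~~ contains_pat s k k.+1) (iota 1 n.-1) && contains_pat s n 1.

Lemma expand_flatten t : expand t = flatten (map blk t).
Proof. by elim: t => [|a t IH] //; rewrite expand_cons1 IH. Qed.

Lemma expand_succ t : (forall v, v \in t -> v != m) -> expand t = map succn t.
Proof.
elim: t => [|a t IH] // H.
rewrite expand_cons1 /blk (negbTE (H a (mem_head _ _))) IH // => v vt.
by apply: H; rewrite inE vt orbT.
Qed.

Lemma iota_rcons_gen a k : iota a k.+1 = iota a k ++ [:: a + k].
Proof. by rewrite -addn1 iotaD. Qed.

Lemma iota_rcons k : iota 1 k.+1 = iota 1 k ++ [:: k.+1].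
Proof. by rewrite iota_rcons_gen add1n. Qed.

Lemma map_succ_iota k : map succn (iota 1 k) = iota 2 k.
Proof. by rewrite -[2]/(1+1) iotaDl. Qed.

Hypothesis hm : 0 < m.

Lemma expand_iota : perm_eq (expand (iota 1 m)) (iota 1 m.+1).
Proof.
have [k em] : exists k, m = k.+1 by exists m.-1; lia.
rewrite em iota_rcons expand_cat expand_succ; last first.
  by move=> v; rewrite mem_iota; lia.
rewrite map_succ_iota expand_cons1 /blk -em eqxx [expand [::]]/= cats0.
have -> : iota 1 m.+1 = [:: 1] ++ (iota 2 k ++ [:: m.+1]).
  by rewrite em; change (1 :: iota 2 k.+1 = 1 :: (iota 2 k ++ [:: k.+2])); rewrite iota_rcons_gen add2n.
by rewrite -[[:: m.+1; 1]]/([:: m.+1] ++ [:: 1]) catA perm_catC.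
Qed.

Lemma L_cyc a : a != 0 -> L a = cyc a.
Proof. by rewrite /L /cyc => /negbTE ->; case: (a == m). Qed.

Lemma E_d t : perm_eq t (iota 1 m) -> Rcond t ->
  perm_eq (expand t) (iota 1 m.+1) && dcond m.+1 (expand t).
Proof.
move=> pt Rt; apply/andP; split.
  apply: perm_trans expand_iota.
  by rewrite !expand_flatten; apply/perm_flatten/perm_map.
apply/andP; split; last first.
  by rewrite contains_pairs; apply: pairs_expand3; rewrite (perm_mem pt) mem_iota; lia.
apply/allP => k; rewrite mem_iota => kr; rewrite contains_pairs; apply/negP.
move/pairs_expand1 => /orP [/andP [_ /eqP]|/hasP [[a b] pab /andP [/eqP e1 /eqP e2]]].
  lia.
move/allP: Rt => /(_ _ pab) /=.
have /andP [ain _] := pairs_mem pab.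
rewrite (perm_mem pt) mem_iota in ain.
rewrite /= in e1 e2.
by rewrite -L_cyc; [rewrite -e1; case: e2 => ->; rewrite eqxx | lia].
Qed.

Lemma contract_cons v x : v != 1 -> contract (v :: x) = cc v :: contract x.
Proof. by rewrite /contract /= => ->. Qed.

Lemma contract_cat x y : contract (x ++ y) = contract x ++ contract y.
Proof. by rewrite /contract filter_cat map_cat. Qed.

Lemma contract_expand t : 0 \notin t -> contract (expand t) = t.
Proof.
elim: t => [|a t IH] // ; rewrite inE negb_or => /andP [a0 t0].
rewrite expand_cons1 contract_cat IH // /blk.
case: eqP => [am|ne].
  rewrite contract_cons; last by lia.
  by rewrite /contract /= cc_succ am.
by rewrite contract_cons; [rewrite cc_succ /contract | lia].
Qed.

Lemma ec_mid x : (forall v, v \in x -> 2 <= v <= m) -> expand (contract x) = x.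
Proof.
elim: x => [|v x IH] // H.
have := H v (mem_head _ _) => vr.
rewrite contract_cons; last by lia.
rewrite expand_cons1 IH; last by move=> w wx; apply: H; rewrite inE wx orbT.
have -> : cc v = v.-1 by rewrite /cc; case: eqP => //; lia.
rewrite /blk; case: eqP => [|_]; first by lia.
by rewrite /= prednK //; lia.
Qed.

Lemma contract_iota : contract (iota 1 m.+1) = iota 1 m.
Proof.
rewrite /contract; change (iota 1 m.+1) with (1 :: iota 2 m).
rewrite /= (all_filterP _); last by apply/allP => v; rewrite mem_iota; lia.
by rewrite -map_succ_iota -map_comp (eq_map cc_succ) map_id.
Qed.

Lemma d_R s : perm_eq s (iota 1 m.+1) -> dcond m.+1 s ->
  [/\ expand (contract s) = s, perm_eq (contract s) (iota 1 m) & Rcond (contract s)].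
Proof.
move=> ps /andP [noS]; rewrite contains_pairs => n1.
have us : uniq s by rewrite (perm_uniq ps) iota_uniq.
have rs : forall v, v \in s -> 1 <= v <= m.+1.
  by move=> v; rewrite (perm_mem ps) mem_iota; lia.
have pc : perm_eq (contract s) (iota 1 m).
  by rewrite -contract_iota; apply/perm_map/perm_filter.
have ec : expand (contract s) = s.
  have [s1 [s2 es]] := pairs_split n1.
  move: us rs; rewrite es => us rs.
  rewrite cat_uniq in us; case/and3P: us => _ hh u2.
  have h1 : m.+1 \notin s1.
    by apply: contra hh => H; apply/hasP; exists m.+1; rewrite ?inE ?eqxx.
  have h2 : 1 \notin s1.
    by apply: contra hh => H; apply/hasP; exists 1; rewrite ?inE ?eqxx ?orbT.
  rewrite !cons_uniq in u2; case/and3P: u2 => h3 h4 _.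
  rewrite inE negb_or in h3; case/andP: h3 => _ h3.
  rewrite contract_cat contract_cons; last by lia.
  rewrite /contract /= -/(contract s2) expand_cat expand_cons1 /blk.
  have -> : cc m.+1 = m by rewrite /cc eqxx.
  rewrite eqxx !ec_mid //.
  - move=> v vs; have := rs v; rewrite mem_cat vs => /(_ isT).
    have : v != 1 by apply: contraNneq h2 => <-.
    have : v != m.+1 by apply: contraNneq h1 => <-.
    lia.
  - move=> v vs; have := rs v; rewrite mem_cat !inE vs !orbT => /(_ isT).
    have : v != 1 by apply: contraNneq h4 => <-.
    have : v != m.+1 by apply: contraNneq h3 => <-.
    lia.
split => //.
apply/allP => [[a b]] pab /=; apply/negP => /eqP eb.
have /andP [ain bin] := pairs_mem pab.
rewrite (perm_mem pc) mem_iota in ain; rewrite (perm_mem pc) mem_iota in bin.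
have := pairs_expand2 pab; rewrite ec L_cyc; last by lia.
rewrite -eb => H.
move/allP: noS => /(_ b); rewrite mem_iota /= contains_pairs H => /(_ _) /negP; apply => //.
Qed.

Lemma cyc_iota : perm_eq (map cyc (iota 1 m)) (iota 1 m).
Proof.
have [k em] : exists k, m = k.+1 by exists m.-1; lia.
rewrite em iota_rcons map_cat.
have -> : map cyc (iota 1 k) = map succn (iota 1 k).
  apply/eq_in_map => v; rewrite mem_iota /cyc => vr.
  by rewrite ifF ?ifF //; apply/eqP; lia.
rewrite map_succ_iota.
have -> : map cyc [:: k.+1] = [:: 1] by rewrite /= /cyc -em eqxx.
by rewrite -iota_rcons -[iota 1 k.+1]/([:: 1] ++ iota 2 k) perm_catC.
Qed.

Lemma rot_R t : perm_eq t (iota 1 m) -> Rcond t ->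
  perm_eq (map cyc t) (iota 1 m) && Rcond (map cyc t).
Proof.
move=> pt Rt; apply/andP; split.
  exact: perm_trans (perm_map _ pt) cyc_iota.
rewrite /Rcond pairs_map all_map; apply/allP => [[a b]] pab /=.
by rewrite (inj_eq cyc_inj); move/allP: Rt => /(_ _ pab).
Qed.

End M.

Lemma inj_le (A B : seq (seq nat)) (f : seq nat -> seq nat) :
  uniq A -> {in A &, injective f} -> {in A, forall x, f x \in B} -> size A <= size B.
Proof.
move=> uA inj fAB; rewrite -(size_map f); apply: uniq_leq_size.
  by rewrite (map_inj_in_uniq inj).
by move=> y /mapP [x xA ->]; exact: fAB.
Qed.

Definition Rl m := [seq t <- permutations (iota 1 m) | Rcond m t].

Lemma mem_Rl m t : (t \in Rl m) = perm_eq t (iota 1 m) && Rcond m t.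
Proof. by rewrite mem_filter mem_permutations andbC. Qed.

Lemma mem_d m s : (s \in d_n1 m.+1) = perm_eq s (iota 1 m.+1) && dcond m.+1 s.
Proof. by rewrite /d_n1 mem_filter mem_permutations andbC. Qed.

Lemma mem_class X i s : (s \in arr_class X i) = (head 0 s == i) && (s \in X).
Proof. by rewrite mem_filter. Qed.

Lemma uniq_Rl m i : uniq (arr_class (Rl m) i).
Proof. by rewrite !filter_uniq // permutations_uniq. Qed.

Lemma uniq_d m i : uniq (arr_class (d_n1 m) i).
Proof. by rewrite !filter_uniq // permutations_uniq. Qed.

Lemma rot_le m (hm : 0 < m) j : 1 <= j <= m ->
  size (arr_class (Rl m) j) <= size (arr_class (Rl m) (cyc m j)).
Proof.
move=> hj; apply: (@inj_le _ _ (map (cyc m))).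
- exact: uniq_Rl.
- by move=> x y _ _; apply: (inj_map (@cyc_inj m)).
move=> t; rewrite !mem_class !mem_Rl => /andP [/eqP ht /andP [pt Rt]].
rewrite rot_R // andbT.
by case: t ht pt Rt => [|a t] /= ht; [lia | rewrite ht].
Qed.

Lemma C_le m (hm : 0 < m) i : 2 <= i <= m.+1 ->
  size (arr_class (d_n1 m.+1) i) <= size (arr_class (Rl m) i.-1).
Proof.
move=> hi; apply: (@inj_le _ _ (contract m)).
- exact: uniq_d.
- move=> x y; rewrite !mem_class !mem_d => /andP [_ /andP [px dx]] /andP [_ /andP [py dy]] e.
  have [ex _ _] := d_R hm px dx; have [ey _ _] := d_R hm py dy.
  by rewrite -ex e ey.
move=> s; rewrite !mem_class !mem_d => /andP [/eqP hs /andP [ps ds]].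
have [_ pc Rc] := d_R hm ps ds.
rewrite mem_Rl pc Rc andbT.
case: s hs ps ds {pc Rc} => [|a s] /= hs _ _; first lia.
have cci : cc m a = i.-1 by rewrite /cc hs; case: eqP => //; lia.
rewrite contract_cons /= ?cci ?eqxx //; lia.
Qed.

Lemma E_le m (hm : 0 < m) j : 1 <= j <= m ->
  size (arr_class (Rl m) j) <= size (arr_class (d_n1 m.+1) j.+1).
Proof.
move=> hj; apply: (@inj_le _ _ (expand m)).
- exact: uniq_Rl.
- have ce : forall t, perm_eq t (iota 1 m) -> contract m (expand m t) = t.
    by move=> t pt; apply: contract_expand => //; rewrite (perm_mem pt) mem_iota.
  move=> x y; rewrite !mem_class !mem_Rl => /andP [_ /andP [px _]] /andP [_ /andP [py _]] e.
  by rewrite -(ce x px) e ce.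
move=> t; rewrite !mem_class !mem_Rl mem_d => /andP [/eqP ht /andP [pt Rt]].
rewrite E_d // andbT.
case: t ht pt Rt => [|a t] /= ht; first lia.
by move=> _ _; case: (a =P m) => h /=; apply/eqP; lia.
Qed.

Lemma class1 m (hm : 0 < m) s : s \in d_n1 m.+1 -> head 0 s != 1.
Proof.
rewrite mem_d => /andP [ps /andP [_]]; rewrite contains_pairs => n1.
have us : uniq s by rewrite (perm_uniq ps) iota_uniq.
have [s1 [s2 es]] := pairs_split n1.
move: us; rewrite es cat_uniq => /and3P [_ hh _].
case: s1 hh {es} => [|x s1] hh /=; first lia.
apply/eqP => ex; move/negP: hh; apply; apply/hasP; exists 1.
  by rewrite !inE eqxx orbT.
by rewrite ex mem_head.
Qed.

Lemma chain m (hm : 0 < m) j : 1 <= j <= m ->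
  size (arr_class (Rl m) j) = size (arr_class (Rl m) 1).
Proof.
set a := fun j => size (arr_class (Rl m) j).
have step : forall j, 1 <= j < m -> a j <= a j.+1.
  move=> k hk; have := @rot_le m hm k; rewrite /cyc ifF ?ifF; last 2 first.
  - by apply/eqP; lia.
  - by apply/eqP; lia.
  by apply; lia.
have lst : a m <= a 1.
  by have := @rot_le m hm m; rewrite /cyc eqxx; apply; lia.
have mono : forall k j, 1 <= j <= k -> k <= m -> a j <= a k.
  elim=> [|k IH] j0 h1 h2; first lia.
  case: (j0 =P k.+1) => [-> //|ne].
  apply: leq_trans (IH j0 _ _) (step k _); lia.
move=> hj; apply/eqP; rewrite eqn_leq; apply/andP; split.
  exact: leq_trans (mono m j _ _) lst.
apply: mono; lia.
Qed.

Theorem proposition4p9 (n : nat) : 2 <= n -> equidistributed n (d_n1 n).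
Proof.
case: n => [|m] // n2; have hm : 0 < m by lia.
have key : forall i, 1 <= i <= m.+1 -> size (arr_class (d_n1 m.+1) i) != 0 ->
    size (arr_class (d_n1 m.+1) i) = size (arr_class (Rl m) 1).
  move=> i hi ne.
  have i1 : i != 1.
    move: ne; rewrite size_filter -lt0n -has_count => /hasP [s sd /eqP hs].
    by rewrite -hs; apply: class1 sd.
  rewrite -(@chain m hm i.-1); last lia.
  apply/eqP; rewrite eqn_leq; apply/andP; split.
    apply: C_le => //; lia.
  have := @E_le m hm i.-1; rewrite prednK; last lia.
  by apply; lia.
move=> i j hi hj ni nj; by rewrite key // key.
Qed.
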